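(* Let $\mathcal{S}$ be a sound and refutationally complete saturation system. Then for all natural numbers $0<n<m$, the system $\mathcal{S}+\mathrm{Literal}\text{-}\mathrm{AIND}^R_2$ refutes neither the clause set $\mathcal{X}_m$ nor the clause set $\mathcal{Y}_{m,n}$.
   Context: Language of linear arithmetic $\{0/0,s/1,p/1,+/2\}$. $\mathcal{T}'$ has axioms (universally closed) $0\neq s(x)$, $p(0)=0$, $p(s(x))=x$, $x+0=x$, $x+s(y)=s(x+y)$, $x\neq0\to x=s(p(x))$, $x+y=y+x$, $(x+y)+z=x+(y+z)$, $x+y=x+z\to y=z$. $m\cdot t$ is $t+(t+\cdots+(t+t)\cdots)$ ($m$ copies), $s^n$ is $n$-fold $s$. $C_m=\forall x,y(m\cdot x=m\cdot y\to x=y)$, $D_{m,n}=\forall x,y\,(s^n(m\cdot x)\neq m\cdot y)$; $\mathcal{X}_m=\mathit{CNF}(\mathit{sk}^\exists(\mathcal{T}'+\neg C_m))$, $\mathcal{Y}_{m,n}=\mathit{CNF}(\mathit{sk}^\exists(\mathcal{T}'+\neg D_{m,n}))$. Skolemization $\mathit{sk}^\exists$/$\mathit{sk}^\forall$ uses canonical Skolem symbols: a strong quantifier $QxA$ with free variables $\vec y$ is replaced by $\mathfrak{s}_{QxA}(\vec y)$, a new function symbol indexed by $QxA$ ($\mathit{sk}^Q$ fixes atoms, commutes with $\wedge,\vee$, $\mathit{sk}^Q(\neg A)=\neg\mathit{sk}^{\overline Q}(A)$, eliminates quantifiers $Q$ and keeps quantifiers $\overline Q$). $\mathit{CNF}$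 gives clause sets of conjunctive normal forms; $\mathcal{E}\vee C=\{E\cup C:E\in\mathcal{E}\}$. Saturation systems: sets of rules $\mathcal{C}/\mathcal{D}$ ($\mathcal{C}$ clause set, $\mathcal{D}$ finite clause set), $+$ = union; a deduction from $\mathcal{C}_0$ is $\mathcal{D}_0=\mathcal{C}_0,\dots,\mathcal{D}_k$ with $\mathcal{D}_{i+1}=\mathcal{D}_i\cup\mathcal{B}_i$ for a rule $\mathcal{D}_i/\mathcal{B}_i$; a refutation has the empty clause in $\mathcal{D}_k$. Sound: any clause $C$ derivable from $\mathcal{C}_0$ has $L(C)\subseteq L(\mathcal{C}_0)$ and $\mathcal{C}_0\models C$; refutationally complete: every inconsistent clause set has a refutation. $\mathrm{Literal}\text{-}\mathrm{AIND}^R_2$: from a clause set containing a clause $\overline{l}(a,a)\vee C$, where $l(x,y)$ is a literal, $a$ is a constant, $l(a,a)$ is ground and $\overline{l}$ denotes the complementary literal, derive $\mathit{CNF}(\neg\,\mathit{sk}^\forall(l(0,a)\wedge\forall x(l(x,a)\to l(s(x),a))))\vee C$, i.e. the clauses $\{\neg l(0,a),l(\sigma,a)\}\cup C$ and $\{\neg l(0,a),\neg l(s(\sigma),a)\}\cup C$ with $\sigma=\mathfrak{s}_{\forall x(l(x,a)\to l(s(x),a))}$. *)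

(* Defs.v *)
From Stdlib Require Import List Arith Bool.
Import ListNotations.

Definition var := nat.

Inductive psym : Type := PEq | PSym (name arity : nat).

(* Terms, function symbols and formulas are mutually defined because the
   canonical Skolem symbol  s_{QxA}  is indexed by the formula QxA. *)
Inductive term : Type :=
| Var (x : var)
| App (f : fsym) (args : list term)
with fsym : Type :=
| FZero
| FSucc
| FPred
| FPlus
| FSym (name arity : nat)
| FSk (A : formula)
with formula : Type :=
| Atom (P : psym) (args : list term)
| Neg (A : formula)
| And (A B : formula)
| Or (A B : formula)
| All (x : var) (A : formula)
| Ex (x : var) (A : formula).

Definition Imp (A B : formula) : formula := Or (Neg A) B.

Fixpoint tvars (t : term) : list var :=
  match t with Var x => [x] | App _ ts => flat_map tvars ts end.

Fixpoint fv (A : formula) : list var :=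
  match A with
  | Atom _ ts => flat_map tvars ts
  | Neg B => fv B
  | And B C | Or B C => fv B ++ fv C
  | All x B | Ex x B => remove Nat.eq_dec x (fv B)
  end.

Definition fvs (A : formula) : list var := nodup Nat.eq_dec (fv A).

Definition parity (P : psym) : nat :=
  match P with PEq => 2 | PSym _ k => k end.

Definition arity (f : fsym) : nat :=
  match f with
  | FZero => 0 | FSucc => 1 | FPred => 1 | FPlus => 2
  | FSym _ k => k
  | FSk A => length (fvs A)
  end.

Definition is_quantified (A : formula) : Prop :=
  match A with All _ _ | Ex _ _ => True | _ => False end.

Fixpoint twf (t : term) : Prop :=
  match t with
  | Var _ => True
  | App f ts => fwf f /\ length ts = arity f /\
                fold_right (fun u P => twf u /\ P) True ts
  end
with fwf (f : fsym) : Prop :=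
  match f with
  | FSk A => is_quantified A /\ qwf A
  | _ => True
  end
with qwf (A : formula) : Prop :=
  match A with
  | Atom P ts => length ts = parity P /\ fold_right (fun u P => twf u /\ P) True ts
  | Neg B => qwf B
  | And B C | Or B C => qwf B /\ qwf C
  | All _ B | Ex _ B => qwf B
  end.

Fixpoint tsubst (s : var -> term) (t : term) : term :=
  match t with Var x => s x | App f ts => App f (map (tsubst s) ts) end.

Definition upd (s : var -> term) (x : var) (t : term) : var -> term :=
  fun y => if Nat.eq_dec y x then t else s y.

(* renaming choice for a binder [x] of body [B] under substitution [s]:
   the bound variable is kept unless it would capture a variable of the
   image of a free variable, in which case a fresh variable is used *)
Definition binder_var (s : var -> term) (x : var) (B : formula) : var :=
  let ys := remove Nat.eq_dec x (fv B) in
  let imgs := flat_map (fun y => tvars (s y)) ys in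
  if existsb (fun v => Nat.eqb v x) imgs then S (list_max imgs) else x.

Fixpoint fsubst (s : var -> term) (A : formula) : formula :=
  match A with
  | Atom P ts => Atom P (map (tsubst s) ts)
  | Neg B => Neg (fsubst s B)
  | And B C => And (fsubst s B) (fsubst s C)
  | Or B C => Or (fsubst s B) (fsubst s C)
  | All x B => let z := binder_var s x B in All z (fsubst (upd s x (Var z)) B)
  | Ex x B => let z := binder_var s x B in Ex z (fsubst (upd s x (Var z)) B)
  end.

Definition subst1 (A : formula) (x : var) (t : term) : formula :=
  fsubst (upd Var x t) A.

Inductive quant : Type := QAll | QEx.
Definition dualq (Q : quant) : quant := match Q with QAll => QEx | QEx => QAll end.

Definition skterm (A : formula) : term := App (FSk A) (map Var (fvs A)).

Fixpoint fsize (A : formula) : nat :=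
  match A with
  | Atom _ _ => 1
  | Neg B => S (fsize B)
  | And B C | Or B C => S (fsize B + fsize C)
  | All _ B | Ex _ B => S (fsize B)
  end.

(* fuel-driven definition (substitution preserves size, so the fuel
   [fsize A] always suffices) *)
Fixpoint skf (n : nat) (Q : quant) (A : formula) : formula :=
  match n with
  | 0 => A
  | S n =>
    match A with
    | Atom _ _ => A
    | Neg B => Neg (skf n (dualq Q) B)
    | And B C => And (skf n Q B) (skf n Q C)
    | Or B C => Or (skf n Q B) (skf n Q C)
    | All x B =>
        match Q with
        | QAll => skf n Q (subst1 B x (skterm A))
        | QEx => All x (skf n Q B)
        end
    | Ex x B =>
        match Q with
        | QEx => skf n Q (subst1 B x (skterm A))
        | QAll => Ex x (skf n Q B)
        end
    end
  end.

Definition sk (Q : quant) (A : formula) : formula := skf (fsize A) Q A.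

Record literal : Type := Lit { lsign : bool; lpred : psym; largs : list term }.

(* a clause is a finite set of literals, represented by a list *)
Definition clause := list literal.
Definition clause_set := clause -> Prop.

Definition lcompl (l : literal) : literal := Lit (negb (lsign l)) (lpred l) (largs l).
Definition lsubst (s : var -> term) (l : literal) : literal :=
  Lit (lsign l) (lpred l) (map (tsubst s) (largs l)).
Definition lform (l : literal) : formula :=
  if lsign l then Atom (lpred l) (largs l) else Neg (Atom (lpred l) (largs l)).
Definition lvars (l : literal) : list var := flat_map tvars (largs l).

Definition cprod (L1 L2 : list clause) : list clause :=
  flat_map (fun c => map (fun d => c ++ d) L2) L1.

(* CNF of a universal formula (universal quantifiers are dropped, the
   matrix is put in CNF by negation normal form and distributivity);
   [pos] is the polarity.  Only universal formulas (with positive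
   universal quantifiers) are ever given to it. *)
Fixpoint cnf_pol (pos : bool) (A : formula) : list clause :=
  match A with
  | Atom P ts => [[Lit pos P ts]]
  | Neg B => cnf_pol (negb pos) B
  | And B C => if pos then cnf_pol pos B ++ cnf_pol pos C
               else cprod (cnf_pol pos B) (cnf_pol pos C)
  | Or B C => if pos then cprod (cnf_pol pos B) (cnf_pol pos C)
              else cnf_pol pos B ++ cnf_pol pos C
  | All _ B | Ex _ B => cnf_pol pos B
  end.

Definition CNF (A : formula) : list clause := cnf_pol true A.
Definition CNFs (As : list formula) : list clause := flat_map CNF As.

Definition of_list (cs : list clause) : clause_set := fun c => In c cs.

Definition clauses_or (E : list clause) (C : clause) : list clause :=
  map (fun e => e ++ C) E.

Definition lwf (l : literal) : Prop :=
  length (largs l) = parity (lpred l) /\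
  fold_right (fun u P => twf u /\ P) True (largs l).
Definition cwf (c : clause) : Prop := forall l, In l c -> lwf l.
Definition wf_set (C : clause_set) : Prop := forall c, C c -> cwf c.

Record structure : Type := {
  dom : Type;
  fint : fsym -> list dom -> dom;
  pint : nat -> nat -> list dom -> Prop   (* PSym name arity *)
}.

Fixpoint teval (M : structure) (rho : var -> dom M) (t : term) : dom M :=
  match t with
  | Var x => rho x
  | App f ts => fint M f (map (teval M rho) ts)
  end.

Definition aeval (M : structure) (P : psym) (ds : list (dom M)) : Prop :=
  match P with
  | PEq => match ds with [d1; d2] => d1 = d2 | _ => False end
  | PSym n k => pint M n k ds
  end.

Definition sat_lit (M : structure) (rho : var -> dom M) (l : literal) : Prop :=
  let a := aeval M (lpred l) (map (teval M rho) (largs l)) in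
  if lsign l then a else ~ a.

Definition sat_clause (M : structure) (c : clause) : Prop :=
  forall rho : var -> dom M, exists l, In l c /\ sat_lit M rho l.

Definition models (M : structure) (C : clause_set) : Prop :=
  forall c, C c -> sat_clause M c.

Definition entails (C : clause_set) (c : clause) : Prop :=
  forall M, models M C -> sat_clause M c.

Definition inconsistent (C : clause_set) : Prop := ~ exists M, models M C.

Fixpoint focc (f : fsym) (t : term) : Prop :=
  match t with
  | Var _ => False
  | App g ts => g = f \/ fold_right (fun u P => focc f u \/ P) False ts
  end.

Inductive symb : Type := SF (f : fsym) | SP (n k : nat).

Definition in_lang_clause (sy : symb) (c : clause) : Prop :=
  exists l, In l c /\
    match sy with
    | SF f => exists t, In t (largs l) /\ focc f t
    | SP n k => lpred l = PSym n k
    end.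

Definition in_lang_set (sy : symb) (C : clause_set) : Prop :=
  exists c, C c /\ in_lang_clause sy c.

Definition sat_system := clause_set -> list clause -> Prop.

Definition is_sat_system (S : sat_system) : Prop :=
  forall C D, S C D -> wf_set C /\ wf_set (of_list D).

Definition ssum (S1 S2 : sat_system) : sat_system := fun C D => S1 C D \/ S2 C D.

Definition same_set (C1 C2 : clause_set) : Prop := forall c, C1 c <-> C2 c.

Inductive deduction (S : sat_system) (C0 : clause_set) : clause_set -> Prop :=
| ded_start : deduction S C0 C0
| ded_step (Di Ci : clause_set) (Bi : list clause) :
    deduction S C0 Di -> same_set Di Ci -> S Ci Bi ->
    deduction S C0 (fun c => Di c \/ In c Bi).

Definition derivable (S : sat_system) (C0 : clause_set) (c : clause) : Prop :=
  exists D, deduction S C0 D /\ D c.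

Definition refutes (S : sat_system) (C0 : clause_set) : Prop :=
  exists D, deduction S C0 D /\ D [].

Definition sound (S : sat_system) : Prop :=
  forall C0 c, derivable S C0 c ->
    (forall sy, in_lang_clause sy c -> in_lang_set sy C0) /\ entails C0 c.

Definition refutationally_complete (S : sat_system) : Prop :=
  forall C, wf_set C -> inconsistent C -> refutes S C.

Definition zero : term := App FZero [].
Definition succ (t : term) : term := App FSucc [t].
Definition pred (t : term) : term := App FPred [t].
Definition plus (t u : term) : term := App FPlus [t; u].

Definition linst (l : literal) (x y : var) (u v : term) : literal :=
  lsubst (fun z => if Nat.eq_dec z x then u else if Nat.eq_dec z y then v else Var z) l.

Definition is_constant (a : term) : Prop :=
  exists f, a = App f [] /\ arity f = 0.

Definition aind_clauses (l : literal) (x y : var) (a : term) : list clause :=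
  CNF (Neg (sk QAll
    (And (lform (linst l x y zero a))
         (All x (Imp (lform (linst l x y (Var x) a))
                     (lform (linst l x y (succ (Var x)) a))))))).

Definition literal_aind2 : sat_system := fun C B =>
  exists (l : literal) (x y : var) (a : term) (c D : clause),
    x <> y /\ is_constant a /\ lvars (linst l x y a a) = [] /\
    C D /\ (forall k, In k D <-> k = lcompl (linst l x y a a) \/ In k c) /\
    B = clauses_or (aind_clauses l x y a) c.

Definition eqf (t u : term) : formula := Atom PEq [t; u].
Definition neqf (t u : term) : formula := Neg (eqf t u).

Definition vx : var := 0.
Definition vy : var := 1.
Definition vz : var := 2.
Definition tx := Var vx.
Definition ty := Var vy.
Definition tz := Var vz.

Definition T' : list formula := [
  All vx (neqf zero (succ tx));
  eqf (pred zero) zero;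
  All vx (eqf (pred (succ tx)) tx);
  All vx (eqf (plus tx zero) tx);
  All vx (All vy (eqf (plus tx (succ ty)) (succ (plus tx ty))));
  All vx (Imp (neqf tx zero) (eqf tx (succ (pred tx))));
  All vx (All vy (eqf (plus tx ty) (plus ty tx)));
  All vx (All vy (All vz (eqf (plus (plus tx ty) tz) (plus tx (plus ty tz)))));
  All vx (All vy (All vz (Imp (eqf (plus tx ty) (plus tx tz)) (eqf ty tz))))
].

(* m . t = t + (t + ... + (t + t)...)  (m copies; only used for m >= 1) *)
Fixpoint mult (m : nat) (t : term) : term :=
  match m with
  | 0 => zero
  | S 0 => t
  | S m' => plus t (mult m' t)
  end.

Fixpoint succn (n : nat) (t : term) : term :=
  match n with 0 => t | S n' => succ (succn n' t) end.

Definition C_ (m : nat) : formula :=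
  All vx (All vy (Imp (eqf (mult m tx) (mult m ty)) (eqf tx ty))).

Definition D_ (m n : nat) : formula :=
  All vx (All vy (neqf (succn n (mult m tx)) (mult m ty))).

Definition X_ (m : nat) : clause_set :=
  of_list (CNFs (map (sk QEx) (T' ++ [Neg (C_ m)]))).

Definition Y_ (m n : nat) : clause_set :=
  of_list (CNFs (map (sk QEx) (T' ++ [Neg (D_ m n)]))).

(* Main.v *)
From Stdlib Require Import List Arith Bool ZArith Lia Classical ClassicalEpsilon FunctionalExtensionality PropExtensionality.
Require Import Defs.
Import ListNotations.
Open Scope Z_scope.

Definition G := (Z * Z * Z)%type.
Definition radd (m a b : Z) : Z := if a + b <? m then a + b else a + b - m.
Definition gadd (m : Z) (u v : G) : G :=
  let '(k1,r1,j1) := u in let '(k2,r2,j2) := v in (k1+k2, radd m r1 r2, j1+j2).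
Definition gz : G := (0,0,0).
Fixpoint gmul (m : Z) (n : nat) (v : G) : G :=
  match n with O => gz | S n => gadd m v (gmul m n v) end.
Definition shK (c : Z) (v : G) : G := let '(k,r,j) := v in (k + c, r, j).
Definition rok (m : Z) (v : G) : Prop := let '(k,r,j) := v in 0 <= r < m.
Definition validb (m : Z) (v : G) : bool :=
  let '(k,r,j) := v in
  ((j =? 0) && (r =? 0) && (0 <=? k) && (k mod m =? 0)) || ((0 <? j) && (0 <=? r) && (r <? m)).

Lemma mod0_iff m k : 0 < m -> (k mod m = 0 <-> exists q, k = m * q).
Proof.
  intros Hm. split.
  - intros H. exists (k / m). pose proof (Z.div_mod k m). lia.
  - intros [q ->]. rewrite Z.mul_comm. apply Z.mod_mul. lia.
Qed.

Lemma validb_spec m k r j : 0 < m ->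
  (validb m (k,r,j) = true <->
   ((j = 0 /\ r = 0 /\ exists q, 0 <= q /\ k = m * q) \/ (0 < j /\ 0 <= r < m))).
Proof.
  intros Hm. unfold validb.
  rewrite orb_true_iff, !andb_true_iff, Z.eqb_eq, Z.eqb_eq, Z.leb_le, Z.eqb_eq, Z.ltb_lt, Z.leb_le, Z.ltb_lt.
  rewrite mod0_iff by lia.
  split.
  - intros [[[[H1 H2] H3] [q Hq]]|[[H1 H2] H3]]; [left|right]; repeat split; auto; try lia.
    exists q; split; [nia|lia].
  - intros [[H1 [H2 [q [Hq1 Hq2]]]]|[H1 [H2 H3]]]; [left|right]; repeat split; auto; try lia.
    exists q; lia.
Qed.

Definition D (m : Z) := {v : G | validb m v = true}.

Lemma D_eq m (d1 d2 : D m) : proj1_sig d1 = proj1_sig d2 -> d1 = d2.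
Proof.
  destruct d1 as [v1 p1], d2 as [v2 p2]; simpl; intros ->.
  f_equal. apply Eqdep_dec.UIP_dec. decide equality.
Qed.
Open Scope Z_scope.

Lemma pos_gt0 mp : 0 < Z.pos mp.
Proof. lia. Qed.

Ltac vspec H := apply validb_spec in H; [|apply pos_gt0].

Lemma valid_zero mp : validb (Z.pos mp) gz = true.
Proof. apply validb_spec; [lia|]. left. repeat split. exists 0. lia. Qed.

Lemma valid_succ mp v : validb (Z.pos mp) v = true -> validb (Z.pos mp) (shK (Z.pos mp) v) = true.
Proof.
  destruct v as [[k r] j]; simpl; intros H; vspec H; apply validb_spec; [lia|].
  destruct H as [[H1 [H2 [q [Hq1 Hq2]]]]|H]; [left|right]; try lia.
  repeat split; auto. exists (q+1). lia.
Qed.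

Lemma valid_pred mp v : validb (Z.pos mp) v = true -> v <> gz -> validb (Z.pos mp) (shK (- Z.pos mp) v) = true.
Proof.
  destruct v as [[k r] j]; simpl; intros H Hn; vspec H; apply validb_spec; [lia|].
  destruct H as [[H1 [H2 [q [Hq1 Hq2]]]]|H]; [left|right]; try lia.
  subst. assert (q <> 0) by (intro; subst; apply Hn; unfold gz; f_equal; f_equal; lia).
  repeat split; auto. exists (q-1). lia.
Qed.

Lemma radd_ok m a b : 0 <= a < m -> 0 <= b < m -> 0 <= radd m a b < m.
Proof. unfold radd; intros; destruct (Z.ltb_spec (a+b) m); lia. Qed.

Lemma valid_add mp u v : validb (Z.pos mp) u = true -> validb (Z.pos mp) v = true ->
  validb (Z.pos mp) (gadd (Z.pos mp) u v) = true.
Proof.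
  destruct u as [[k1 r1] j1], v as [[k2 r2] j2]; simpl; intros H1 H2; vspec H1; vspec H2.
  apply validb_spec; [lia|].
  destruct H1 as [[A1 [B1 [q1 [C1 E1]]]]|[A1 B1]]; destruct H2 as [[A2 [B2 [q2 [C2 E2]]]]|[A2 B2]];
    try (right; split; [lia| apply radd_ok; lia]).
  left. unfold radd. destruct (Z.ltb_spec (r1+r2) (Z.pos mp)); [|lia].
  repeat split; try lia. exists (q1+q2). lia.
Qed.

Definition DD mp := D (Z.pos mp).
Definition dzero mp : DD mp := exist _ gz (valid_zero mp).
Definition dsucc mp (d : DD mp) : DD mp := exist _ _ (valid_succ mp _ (proj2_sig d)).
Definition G_eq_dec (u v : G) : {u = v} + {u <> v}.
Proof. decide equality; [|decide equality]; apply Z.eq_dec. Defined.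
Definition dpred mp (d : DD mp) : DD mp :=
  match G_eq_dec (proj1_sig d) gz with
  | left _ => d
  | right H => exist _ _ (valid_pred mp _ (proj2_sig d) H)
  end.
Definition dadd mp (d e : DD mp) : DD mp := exist _ _ (valid_add mp _ _ (proj2_sig d) (proj2_sig e)).

Lemma val_dpred mp (d : DD mp) : proj1_sig (dpred mp d) =
  if G_eq_dec (proj1_sig d) gz then proj1_sig d else shK (- Z.pos mp) (proj1_sig d).
Proof. unfold dpred. destruct (G_eq_dec _ _); reflexivity. Qed.

Ltac dd d := let k := fresh "k" in let r := fresh "r" in let j := fresh "j" in let H0 := fresh "H0" in
  destruct d as [[[k r] j] H0]; pose proof H0 as H; vspec H.

Lemma T1 mp (d : DD mp) : dzero mp <> dsucc mp d.
Proof.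
  dd d. intro E. apply (f_equal (@proj1_sig _ _)) in E. simpl in E. inversion E.
  destruct H as [[? [? [q [? ?]]]]|?]; lia.
Qed.

Lemma T2 mp : dpred mp (dzero mp) = dzero mp.
Proof. apply D_eq. rewrite val_dpred. destruct (G_eq_dec _ _); simpl; auto. exfalso; auto. Qed.

Lemma T3 mp d : dpred mp (dsucc mp d) = d.
Proof.
  apply D_eq. rewrite val_dpred. destruct (G_eq_dec _ _) as [E|E].
  - exfalso. apply (T1 mp d). apply D_eq. simpl. rewrite <- E. reflexivity.
  - destruct d as [[[k r] j] H]. simpl. f_equal. f_equal. lia.
Qed.

Lemma T4 mp d : dadd mp d (dzero mp) = d.
Proof.
  apply D_eq. dd d. simpl. unfold radd. destruct (Z.ltb_spec (r+0) (Z.pos mp)).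
  - f_equal; [f_equal|]; lia.
  - destruct H as [[? [? [q [? ?]]]]|?]; lia.
Qed.

Lemma T5 mp d e : dadd mp d (dsucc mp e) = dsucc mp (dadd mp d e).
Proof.
  apply D_eq. destruct d as [[[k r] j] H], e as [[[k' r'] j'] H']. simpl. f_equal. f_equal. lia.
Qed.

Lemma T6 mp d : d <> dzero mp -> d = dsucc mp (dpred mp d).
Proof.
  intros Hn. apply D_eq. simpl. rewrite val_dpred. destruct (G_eq_dec _ _) as [E|E].
  - exfalso. apply Hn. apply D_eq. exact E.
  - destruct d as [[[k r] j] H]. simpl. f_equal. f_equal. lia.
Qed.

Lemma valid_rok mp v : validb (Z.pos mp) v = true -> rok (Z.pos mp) v.
Proof. destruct v as [[k r] j]; intros H; vspec H; simpl. destruct H as [[? [? [q [? ?]]]]|?]; lia. Qed.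

Lemma radd_comm m a b : radd m a b = radd m b a.
Proof. unfold radd. rewrite (Z.add_comm a b). reflexivity. Qed.

Lemma radd_assoc m a b c : 0 <= a < m -> 0 <= b < m -> 0 <= c < m ->
  radd m (radd m a b) c = radd m a (radd m b c).
Proof.
  intros. unfold radd.
  destruct (Z.ltb_spec (a+b) m); destruct (Z.ltb_spec (b+c) m);
  repeat match goal with |- context [Z.ltb ?x ?y] => destruct (Z.ltb_spec x y) end; lia.
Qed.

Lemma gadd_comm m u v : gadd m u v = gadd m v u.
Proof. destruct u as [[? ?] ?], v as [[? ?] ?]; simpl. rewrite radd_comm. f_equal; [f_equal|]; lia. Qed.

Lemma gadd_assoc m u v w : rok m u -> rok m v -> rok m w ->
  gadd m (gadd m u v) w = gadd m u (gadd m v w).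
Proof.
  destruct u as [[? ?] ?], v as [[? ?] ?], w as [[? ?] ?]; simpl; intros.
  rewrite radd_assoc by auto. f_equal; [f_equal|]; lia.
Qed.

Lemma gadd_cancel m u v w : rok m u -> rok m v -> rok m w ->
  gadd m u v = gadd m u w -> v = w.
Proof.
  destruct u as [[? ?] ?], v as [[? ?] ?], w as [[? ?] ?]; simpl; intros A B C E.
  inversion E. unfold radd in *.
  repeat match goal with H : context [Z.ltb ?x ?y] |- _ => destruct (Z.ltb_spec x y) end;
  f_equal; try f_equal; lia.
Qed.

Lemma gadd_rok m u v : rok m u -> rok m v -> rok m (gadd m u v).
Proof. destruct u as [[? ?] ?], v as [[? ?] ?]; simpl; intros. apply radd_ok; auto. Qed.

Lemma T7 mp d e : dadd mp d e = dadd mp e d.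
Proof. apply D_eq. simpl. apply gadd_comm. Qed.

Lemma T8 mp d e f : dadd mp (dadd mp d e) f = dadd mp d (dadd mp e f).
Proof.
  apply D_eq. simpl. apply gadd_assoc; apply valid_rok; apply proj2_sig.
Qed.

Lemma T9 mp d e f : dadd mp d e = dadd mp d f -> e = f.
Proof.
  intros E. apply D_eq. apply (f_equal (@proj1_sig _ _)) in E. simpl in E.
  eapply gadd_cancel; [| | |exact E]; apply valid_rok; apply proj2_sig.
Qed.
Open Scope Z_scope.

Lemma radd_mod m a b : 0 < m -> 0 <= a < m -> 0 <= b < m -> radd m a b = (a + b) mod m.
Proof.
  intros Hm Ha Hb. unfold radd. destruct (Z.ltb_spec (a+b) m).
  - rewrite Z.mod_small; lia.
  - replace (a+b) with ((a+b-m) + 1*m) at 2 by lia. rewrite Z.mod_add by lia. rewrite Z.mod_small; lia.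
Qed.

Lemma gmul_closed m n k r j : 0 < m -> 0 <= r < m ->
  gmul m n (k,r,j) = (Z.of_nat n * k, (Z.of_nat n * r) mod m, Z.of_nat n * j).
Proof.
  intros Hm Hr. induction n as [|n IH]; simpl gmul.
  - unfold gz. simpl. rewrite Z.mod_0_l; [reflexivity|lia].
  - rewrite IH. cbv beta iota delta [gadd]. rewrite radd_mod; auto; [|apply Z.mod_pos_bound; lia].
    rewrite Zplus_mod_idemp_r. 
    replace (r + Z.of_nat n * r) with (Z.of_nat (S n) * r) by lia. f_equal; [f_equal|]; lia.
Qed.

Definition kof (v : G) : Z := let '(k,_,_) := v in k.
Definition jof (v : G) : Z := let '(_,_,j) := v in j.

Definition val {mp} (d : DD mp) : G := proj1_sig d.

Definition stdD mp (n : nat) : DD mp := Nat.iter n (dsucc mp) (dzero mp).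

Lemma val_stdD mp n : val (stdD mp n) = (Z.pos mp * Z.of_nat n, 0, 0).
Proof.
  induction n as [|n IH].
  - reflexivity.
  - change (val (stdD mp (S n))) with (shK (Z.pos mp) (val (stdD mp n))). rewrite IH.
    cbv beta iota delta [shK]. f_equal; f_equal; lia.
Qed.

Lemma classify mp (d : DD mp) : (exists n, d = stdD mp n) \/ 0 < jof (val d).
Proof.
  destruct d as [[[k r] j] H0]. pose proof H0 as H. vspec H. unfold val; simpl.
  destruct H as [[A [B [q [C E]]]]|[A B]]; [left|right; auto].
  exists (Z.to_nat q). apply D_eq. change (proj1_sig (stdD mp (Z.to_nat q))) with (val (stdD mp (Z.to_nat q))).
  rewrite val_stdD. change (proj1_sig (exist _ (k,r,j) H0)) with (k,r,j). subst. f_equal; f_equal. lia.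
Qed.

Lemma gadd_gz m v : 0 < m -> rok m v -> gadd m gz v = v.
Proof. destruct v as [[k r] j]; simpl; intros. rewrite radd_mod by (auto; lia). rewrite Z.mod_small; auto. Qed.

Lemma gmul_rok m n v : 0 < m -> rok m v -> rok m (gmul m n v).
Proof. destruct v as [[k r] j]; intros. rewrite gmul_closed; auto. simpl. apply Z.mod_pos_bound; lia. Qed.

Lemma gz_rok m : 0 < m -> rok m gz.
Proof. simpl; lia. Qed.

Lemma gmul_plus m a b v : 0 < m -> rok m v -> gmul m (a + b) v = gadd m (gmul m a v) (gmul m b v).
Proof.
  destruct v as [[k r] j]; intros Hm Hr. simpl in Hr. rewrite !gmul_closed; auto. cbv beta iota delta [gadd].
  rewrite radd_mod by (auto; apply Z.mod_pos_bound; lia).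
  rewrite <- Zplus_mod. replace (Z.of_nat a * r + Z.of_nat b * r) with (Z.of_nat (a+b) * r) by lia.
  f_equal; [f_equal|]; lia.
Qed.

Lemma gadd_shK m u v c : gadd m u (shK c v) = shK c (gadd m u v).
Proof. destruct u as [[? ?] ?], v as [[? ?] ?]; simpl. f_equal; f_equal; lia. Qed.

Lemma shK_rok m c v : rok m v -> rok m (shK c v).
Proof. destruct v as [[? ?] ?]; simpl; auto. Qed.

Definition tame mp (f : DD mp -> DD mp) : Prop :=
  exists (a : nat) (c : G) (N : nat), rok (Z.pos mp) c /\ 0 <= jof c /\
    (forall d, 0 < jof (val d) -> val (f d) = gadd (Z.pos mp) (gmul (Z.pos mp) a (val d)) c) /\
    (forall n, (N <= n)%nat -> val (f (stdD mp n)) = gadd (Z.pos mp) (gmul (Z.pos mp) a (val (stdD mp n))) c).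

Lemma val_rok mp (d : DD mp) : rok (Z.pos mp) (val d).
Proof. exact (valid_rok _ _ (proj2_sig d)). Qed.

Lemma val_j mp (d : DD mp) : 0 <= jof (val d).
Proof. destruct d as [[[k r] j] H0]. pose proof H0 as H. vspec H. unfold val; simpl. lia. Qed.

Lemma tame_const mp (e : DD mp) : tame mp (fun _ => e).
Proof.
  exists O, (val e), O. split; [apply val_rok|]. split; [apply val_j|].
  split; intros; simpl gmul; rewrite gadd_gz; auto; try apply val_rok; lia.
Qed.

Lemma gmul1 m v : 0 < m -> rok m v -> gmul m 1 v = v.
Proof. intros. simpl. rewrite gadd_comm. apply gadd_gz; auto. Qed.

Lemma tame_id mp : tame mp (fun d => d).
Proof.
  exists 1%nat, gz, O. split; [apply gz_rok; lia|]. split; [simpl; lia|].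
  split; intros; rewrite gmul1, gadd_comm, gadd_gz; auto; try apply val_rok; try apply gz_rok; lia.
Qed.

Lemma tame_succ mp f : tame mp f -> tame mp (fun d => dsucc mp (f d)).
Proof.
  intros (a & c & N & Hr & Hj & H1 & H2).
  exists a, (shK (Z.pos mp) c), N. split; [apply shK_rok; auto|]. split; [destruct c as [[? ?] ?]; simpl in *; lia|].
  split; intros; rewrite gadd_shK; [rewrite <- H1 | rewrite <- H2]; auto.
Qed.

Lemma tame_add mp f h : tame mp f -> tame mp h -> tame mp (fun d => dadd mp (f d) (h d)).
Proof.
  intros (a & c & N & Hr & Hj & H1 & H2) (b & e & M & Hr' & Hj' & H1' & H2').
  assert (Hm : 0 < Z.pos mp) by lia.
  assert (key : forall v, rok (Z.pos mp) v ->
    gadd (Z.pos mp) (gadd (Z.pos mp) (gmul (Z.pos mp) a v) c) (gadd (Z.pos mp) (gmul (Z.pos mp) b v) e)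
    = gadd (Z.pos mp) (gmul (Z.pos mp) (a + b) v) (gadd (Z.pos mp) c e)).
  { intros v Hv. rewrite gmul_plus by auto.
    assert (R1 := gmul_rok _ a _ Hm Hv). assert (R2 := gmul_rok _ b _ Hm Hv).
    rewrite !gadd_assoc by (auto; apply gadd_rok; auto).
    f_equal. rewrite <- !gadd_assoc by auto. f_equal. apply gadd_comm. }
  exists (a + b)%nat, (gadd (Z.pos mp) c e), (N + M)%nat.
  split; [apply gadd_rok; auto|]. split; [destruct c as [[? ?] ?], e as [[? ?] ?]; simpl in *; lia|].
  split; intros.
  - unfold val at 1; simpl. fold (val (f d)). fold (val (h d)). rewrite H1, H1' by auto. apply key, val_rok.
  - unfold val at 1; simpl. fold (val (f (stdD mp n))). fold (val (h (stdD mp n))).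
    rewrite H2 by lia. rewrite H2' by lia. apply key, val_rok.
Qed.
Open Scope Z_scope.

Lemma kof_lin m a v c : 0 < m -> rok m v ->
  kof (gadd m (gmul m a v) c) = Z.of_nat a * kof v + kof c.
Proof. destruct v as [[k r] j], c as [[k' r'] j']; intros Hm Hr. rewrite gmul_closed; auto. Qed.

Lemma jof_lin m a v c : 0 < m -> rok m v ->
  jof (gadd m (gmul m a v) c) = Z.of_nat a * jof v + jof c.
Proof. destruct v as [[k r] j], c as [[k' r'] j']; intros Hm Hr. rewrite gmul_closed; auto. Qed.

Lemma val_inj mp (d e : DD mp) : val d = val e -> d = e.
Proof. apply D_eq. Qed.

Lemma kof_t k r j : kof (k,r,j) = k. Proof. reflexivity. Qed.
Lemma jof_t k r j : jof (k,r,j) = j. Proof. reflexivity. Qed.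

Definition praw (m : Z) (c : G) : G := if G_eq_dec c gz then c else shK (- m) c.

Lemma tame_pred mp f : tame mp f -> tame mp (fun d => dpred mp (f d)).
Proof.
  intros (a & c & N & Hr & Hj & H1 & H2).
  assert (Hm : 0 < Z.pos mp) by lia.
  destruct a as [|a'].
  - exists O, (praw (Z.pos mp) c), N.
    assert (Hr' : rok (Z.pos mp) (praw (Z.pos mp) c)) by (unfold praw; destruct (G_eq_dec _ _); auto; apply shK_rok; auto).
    split; [auto|]. split; [unfold praw; destruct (G_eq_dec _ _); auto; destruct c as [[? ?] ?]; simpl in *; lia|].
    split; intros.
    + unfold val at 1. rewrite val_dpred. fold (val (f d)). rewrite H1 by auto. simpl gmul.
      rewrite !gadd_gz by auto. reflexivity.
    + unfold val at 1. rewrite val_dpred. fold (val (f (stdD mp n))). rewrite H2 by auto. simpl gmul.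
      rewrite !gadd_gz by auto. reflexivity.
  - exists (S a'), (shK (- Z.pos mp) c), (N + Z.to_nat (Z.abs (kof c)) + 1)%nat.
    split; [apply shK_rok; auto|]. split; [destruct c as [[? ?] ?]; simpl in *; lia|].
    split; intros.
    + unfold val at 1. rewrite val_dpred. fold (val (f d)). rewrite H1 by auto.
      destruct (G_eq_dec _ _) as [E|E].
      * exfalso. apply (f_equal jof) in E. rewrite jof_lin in E by (auto; apply val_rok). change (jof gz) with 0 in E. nia.
      * rewrite gadd_shK. reflexivity.
    + unfold val at 1. rewrite val_dpred. fold (val (f (stdD mp n))). rewrite H2 by lia.
      destruct (G_eq_dec _ _) as [E|E].
      * exfalso. apply (f_equal kof) in E. rewrite kof_lin in E by (auto; apply val_rok).
        rewrite val_stdD, kof_t in E. change (kof gz) with 0 in E. nia.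
      * rewrite gadd_shK. reflexivity.
Qed.

Lemma LI_base mp (P : DD mp -> Prop) : forall n, P (stdD mp 0) -> ~ P (stdD mp n) ->
  exists d, P d /\ ~ P (dsucc mp d).
Proof.
  induction n as [|n IH]; intros H0 Hn; [contradiction|].
  destruct (classic (P (stdD mp n))) as [Y|Y].
  - exists (stdD mp n). split; auto.
  - apply IH; auto.
Qed.

Lemma LI mp (P : DD mp -> Prop) f h : tame mp f -> tame mp h ->
  ((forall d, P d <-> f d = h d) \/ (forall d, P d <-> f d <> h d)) ->
  forall a, P (dzero mp) -> ~ P a -> exists d, P d /\ ~ P (dsucc mp d).
Proof.
  intros Tf Th HP a H0 Ha.
  assert (Hm : 0 < Z.pos mp) by lia.
  destruct (classic (exists n, ~ P (stdD mp n))) as [[n Hn]|Hall].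
  { apply (LI_base mp P n); auto. }
  assert (Hstd : forall n, P (stdD mp n)).
  { intros n. apply NNPP. intro. apply Hall. eauto. }
  assert (Hna : 0 < jof (val a)).
  { destruct (classify mp a) as [[n ->]|?]; auto. exfalso; auto. }
  destruct Tf as (al & c & N & Hr & Hj & H1 & H2).
  destruct Th as (be & e & M & Hr' & Hj' & H1' & H2').
  set (n0 := (N + M)%nat).
  assert (Ealbe : forall n, (N + M <= n)%nat -> f (stdD mp n) = h (stdD mp n) -> al = be -> c = e).
  { intros n Hn E Eab. subst be. apply (f_equal val) in E. rewrite H2, H2' in E by lia.
    eapply gadd_cancel; [| | |exact E]; auto. apply gmul_rok; auto. apply val_rok. }
  destruct HP as [HP|HP].
  -
    assert (E0 : f (stdD mp n0) = h (stdD mp n0)) by (apply HP; auto).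
    assert (E1 : f (stdD mp (S n0)) = h (stdD mp (S n0))) by (apply HP; auto).
    assert (Eab : al = be).
    { apply (f_equal val) in E0. apply (f_equal val) in E1.
      rewrite H2, H2' in E0 by (unfold n0; lia). rewrite H2, H2' in E1 by (unfold n0; lia).
      apply (f_equal kof) in E0. apply (f_equal kof) in E1.
      rewrite !kof_lin in E0, E1 by (auto; apply val_rok). rewrite !val_stdD, !kof_t in E0, E1.
      nia. }
    assert (c = e) by (apply (Ealbe n0); auto; unfold n0; lia).
    subst. exfalso. apply Ha, HP. apply val_inj. rewrite H1, H1' by auto. reflexivity.
  - assert (Ea : f a = h a) by (apply NNPP; intro X; apply Ha, HP; auto).
    destruct (Nat.eq_dec al be) as [Eab|Nab].
    + subst be. assert (c = e).
      { apply (f_equal val) in Ea. rewrite H1, H1' in Ea by auto.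
        eapply gadd_cancel; [| | |exact Ea]; auto. apply gmul_rok; auto. apply val_rok. }
      subst. exfalso. apply (HP (stdD mp n0)); auto. apply val_inj. rewrite H2, H2' by (unfold n0; lia). reflexivity.
    + assert (Anz : a <> dzero mp).
      { intro E; subst. simpl in Hna. lia. }
      exists (dpred mp a). rewrite <- (T6 mp a Anz). split; auto.
      apply HP. intro E.
      assert (Hpa : val (dpred mp a) = shK (- Z.pos mp) (val a)).
      { unfold val at 1. rewrite val_dpred. destruct (G_eq_dec _ _) as [X|X]; auto.
        exfalso. apply Anz. apply val_inj. exact X. }
      assert (Hnp : 0 < jof (val (dpred mp a))).
      { rewrite Hpa. destruct (val a) as [[? ?] ?]; simpl in *; lia. }
      apply (f_equal val) in E. apply (f_equal val) in Ea.
      rewrite H1, H1' in E, Ea by auto.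
      apply (f_equal kof) in E. apply (f_equal kof) in Ea.
      rewrite !kof_lin in E, Ea by (auto; apply val_rok).
      rewrite Hpa in E. destruct (val a) as [[ka ra] ja]. rewrite kof_t in Ea. simpl shK in E. rewrite kof_t in E.
      assert (Z.of_nat al <> Z.of_nat be) by lia. nia.
Qed.
Open Scope nat_scope.

Definition envupd {T : Type} (rho : var -> T) (x : var) (d : T) : var -> T :=
  fun v => if Nat.eq_dec v x then d else rho v.

Fixpoint feval (M : structure) (rho : var -> dom M) (A : formula) : Prop :=
  match A with
  | Atom P ts => aeval M P (map (teval M rho) ts)
  | Neg B => ~ feval M rho B
  | And B C => feval M rho B /\ feval M rho C
  | Or B C => feval M rho B \/ feval M rho C
  | All x B => forall d, feval M (envupd rho x d) B
  | Ex x B => exists d, feval M (envupd rho x d) B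
  end.

Fixpoint tsz (t : term) : nat :=
  match t with
  | Var _ => 1
  | App f ts => S (fsz f + (fix go (l : list term) : nat :=
                               match l with [] => 0 | u :: l' => tsz u + go l' end) ts)
  end
with fsz (f : fsym) : nat :=
  match f with FSk A => S (frsz A) | _ => 1 end
with frsz (A : formula) : nat :=
  match A with
  | Atom _ ts => S ((fix go (l : list term) : nat :=
                       match l with [] => 0 | u :: l' => tsz u + go l' end) ts)
  | Neg B => S (frsz B)
  | And B C | Or B C => S (frsz B + frsz C)
  | All _ B | Ex _ B => S (frsz B)
  end.

Lemma tsz_App f ts : tsz (App f ts) = S (fsz f + list_sum (map tsz ts)).
Proof. simpl. f_equal. f_equal. induction ts; simpl; auto. Qed.
Lemma frsz_Atom P ts : frsz (Atom P ts) = S (list_sum (map tsz ts)).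
Proof. simpl. f_equal. induction ts; simpl; auto. Qed.
Lemma in_sum_le u ts : In u ts -> (tsz u <= list_sum (map tsz ts))%nat.
Proof. induction ts as [|v ts IH]; simpl; intros H; [contradiction|]. destruct H as [->|H]; [lia|]. specialize (IH H). lia. Qed.

Fixpoint term_ind2 (P : term -> Prop) (HV : forall x, P (Var x))
  (HA : forall f ts, Forall P ts -> P (App f ts)) (t : term) : P t :=
  match t with
  | Var x => HV x
  | App f ts => HA f ts ((fix go (l : list term) : Forall P l :=
                  match l with [] => Forall_nil P | u :: l' => Forall_cons u (term_ind2 P HV HA u) (go l') end) ts)
  end.

Definition fintM mp (g : formula -> DD mp) (f : fsym) (args : list (DD mp)) : DD mp :=
  match f, args with
  | FZero, _ => dzero mp
  | FSucc, [d] => dsucc mp d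
  | FPred, [d] => dpred mp d
  | FPlus, [d1; d2] => dadd mp d1 d2
  | FSk A, _ => g A
  | _, _ => dzero mp
  end.

Definition Mg mp (g : formula -> DD mp) : structure :=
  {| dom := DD mp; fint := fintM mp g; pint := fun _ _ _ => False |}.

Lemma teval_agree mp (g1 g2 : formula -> DD mp) t :
  (forall A, (frsz A < tsz t)%nat -> g1 A = g2 A) ->
  forall rho, teval (Mg mp g1) rho t = teval (Mg mp g2) rho t.
Proof.
  induction t as [x|f ts IH] using term_ind2; intros Hg rho; [reflexivity|].
  rewrite tsz_App in Hg. simpl.
  assert (E : map (teval (Mg mp g1) rho) ts = map (teval (Mg mp g2) rho) ts).
  { apply map_ext_in. intros u Hu. rewrite Forall_forall in IH. apply IH; auto.
    intros A HA. apply Hg. pose proof (in_sum_le u ts Hu). lia. }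
  transitivity (fintM mp g1 f (map (teval (Mg mp g2) rho) ts)); [f_equal; exact E|].
  destruct f; try reflexivity. unfold fintM. apply Hg. simpl. lia.
Qed.

Lemma feval_agree mp (g1 g2 : formula -> DD mp) B :
  (forall A, (frsz A < frsz B)%nat -> g1 A = g2 A) ->
  forall rho, feval (Mg mp g1) rho B <-> feval (Mg mp g2) rho B.
Proof.
  induction B; intros Hg rho; simpl.
  - assert (E : map (teval (Mg mp g1) rho) args = map (teval (Mg mp g2) rho) args).
    { apply map_ext_in. intros u Hu. apply (teval_agree mp g1 g2).
      intros A HA. apply Hg. rewrite frsz_Atom. pose proof (in_sum_le u args Hu). lia. }
    assert (E2 : @map term (DD mp) (teval (Mg mp g1) rho) args = @map term (DD mp) (teval (Mg mp g2) rho) args) by exact E.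
    rewrite E2. destruct P; reflexivity.
  - rewrite IHB; [reflexivity|]. intros; apply Hg; simpl; lia.
  - rewrite IHB1, IHB2; [reflexivity| |]; intros; apply Hg; simpl; lia.
  - rewrite IHB1, IHB2; [reflexivity| |]; intros; apply Hg; simpl; lia.
  - split; intros H d; specialize (H d); [rewrite <- IHB|rewrite IHB]; auto; intros; apply Hg; simpl; lia.
  - split; intros [d H]; exists d; [rewrite <- IHB|rewrite IHB]; auto; intros; apply Hg; simpl; lia.
Qed.

Definition rho0 mp : var -> DD mp := fun _ => dzero mp.

Definition step mp (g : formula -> DD mp) : formula -> DD mp := fun A =>
  match A with
  | All x B => epsilon (inhabits (dzero mp)) (fun d => ~ feval (Mg mp g) (envupd (rho0 mp) x d) B)
  | _ => dzero mp
  end.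

Definition giter mp (k : nat) : formula -> DD mp := Nat.iter k (step mp) (fun _ => dzero mp).
Definition gfin mp (A : formula) : DD mp := giter mp (S (frsz A)) A.

Lemma frsz_pos A : (1 <= frsz A)%nat.
Proof. destruct A; simpl; lia. Qed.

Lemma stab mp : forall s A, (frsz A <= s)%nat -> forall k1 k2, (frsz A < k1)%nat -> (frsz A < k2)%nat ->
  giter mp k1 A = giter mp k2 A.
Proof.
  induction s as [|s IH]; intros A HA k1 k2 H1 H2.
  - pose proof (frsz_pos A). lia.
  - destruct k1 as [|k1]; [lia|]. destruct k2 as [|k2]; [lia|].
    unfold giter; simpl Nat.iter. fold (giter mp k1). fold (giter mp k2).
    destruct A; try reflexivity. unfold step. f_equal.
    apply functional_extensionality. intro d. apply propositional_extensionality.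
    simpl in HA, H1, H2.
    split; intros Hn Hf; apply Hn; eapply feval_agree; [|exact Hf| |exact Hf]; intros A' HA'; try symmetry;
      apply (IH A'); lia.
Qed.

Lemma gfin_agree mp k B : (frsz B < k)%nat ->
  forall A, (frsz A < frsz B)%nat -> gfin mp A = giter mp k A.
Proof. intros Hk A HA. unfold gfin. apply (stab mp (frsz A)); lia. Qed.

Lemma gfin_good mp x B :
  (exists d, ~ feval (Mg mp (gfin mp)) (envupd (rho0 mp) x d) B) ->
  ~ feval (Mg mp (gfin mp)) (envupd (rho0 mp) x (gfin mp (All x B))) B.
Proof.
  intros [d Hd].
  assert (Ag : forall rho, feval (Mg mp (gfin mp)) rho B <-> feval (Mg mp (giter mp (S (frsz B)))) rho B).
  { apply feval_agree. apply gfin_agree. lia. }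
  unfold gfin at 2. simpl frsz. unfold giter at 1. simpl Nat.iter. fold (giter mp (S (frsz B))).
  unfold step. rewrite Ag.
  apply (epsilon_spec (inhabits (dzero mp)) (fun d => ~ feval (Mg mp (giter mp (S (frsz B)))) (envupd (rho0 mp) x d) B)).
  exists d. rewrite <- Ag. exact Hd.
Qed.
Open Scope nat_scope.

Lemma teval_subst M rho s t : teval M rho (tsubst s t) = teval M (fun v => teval M rho (s v)) t.
Proof.
  induction t as [x|f ts IH] using term_ind2; [reflexivity|]. simpl. f_equal.
  rewrite map_map. apply map_ext_in. intros u Hu. rewrite Forall_forall in IH. apply IH; auto.
Qed.

Lemma teval_ext M rho1 rho2 t : (forall v, In v (tvars t) -> rho1 v = rho2 v) ->
  teval M rho1 t = teval M rho2 t.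
Proof.
  induction t as [x|f ts IH] using term_ind2; intros H; simpl.
  - apply H. simpl; auto.
  - f_equal. apply map_ext_in. intros u Hu. rewrite Forall_forall in IH. apply IH; auto.
    intros v Hv. apply H. simpl. apply in_flat_map. eauto.
Qed.

Lemma term_tame mp g t rho x : tame mp (fun d => teval (Mg mp g) (envupd rho x d) t).
Proof.
  revert rho x. induction t as [v|f ts IH] using term_ind2; intros rho x.
  - simpl. unfold envupd. destruct (Nat.eq_dec v x); [apply tame_id|apply tame_const].
  - simpl. destruct f; unfold fintM;
    try (apply tame_const);
    (destruct ts as [|t1 [|t2 [|t3 ts]]]; simpl; try apply tame_const;
     inversion IH as [|? ? IH1 IH']; subst; inversion IH' as [|? ? IH2 IH'']; subst).
    + apply tame_succ. apply IH1.
    + apply tame_pred. apply IH1.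
    + apply tame_add; [apply IH1|apply IH2].
Qed.

Lemma LI_lit mp (g : formula -> DD mp) (b : bool) (P : psym) (ts : list term) (rho1 : var -> DD mp) (x : var) :
  let X := fun (u : DD mp) => aeval (Mg mp g) P (map (teval (Mg mp g) (envupd rho1 x u)) ts) in
  let phi := fun (u : DD mp) => if b then X u else ~ X u in
  forall a, phi (dzero mp) -> ~ phi a -> exists d, phi d /\ ~ phi (dsucc mp d).
Proof.
  intros X phi a H0 Ha.
  destruct P as [|n k].
  - destruct ts as [|t1 [|t2 [|t3 ts]]];
      try (exfalso; unfold phi, X in *; simpl in *; destruct b; tauto).
    apply (LI mp phi (fun d => teval (Mg mp g) (envupd rho1 x d) t1) (fun d => teval (Mg mp g) (envupd rho1 x d) t2)) with (a := a);
      try apply term_tame; auto.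
    unfold phi, X; simpl. destruct b; [left|right]; intros; reflexivity.
  - exfalso; unfold phi, X in *; simpl in *; destruct b; tauto.
Qed.
Open Scope nat_scope.

Lemma aind_calc b P ts x y a :
  let l := Lit b P ts in
  let L0 := linst l x y zero a in let L1 := linst l x y (Var x) a in
  let L2 := linst l x y (succ (Var x)) a in
  let sg := skterm (All x (Imp (lform L1) (lform L2))) in
  aind_clauses l x y a = [[lcompl L0; lsubst (upd Var x sg) L1]; [lcompl L0; lcompl (lsubst (upd Var x sg) L2)]].
Proof. intros. destruct b; reflexivity. Qed.

Lemma tvars_keep s t v : In v (tvars t) -> s v = Var v -> In v (tvars (tsubst s t)).
Proof.
  induction t as [w|f ts IH] using term_ind2; simpl; intros H E.
  - destruct H as [<-|[]]. rewrite E. simpl. auto.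
  - apply in_flat_map in H. destruct H as [u [Hu Hv]]. apply in_flat_map. exists (tsubst s u).
    split; [apply in_map; auto|]. rewrite Forall_forall in IH. apply IH; auto.
Qed.

Lemma sat_lcompl M rho l : sat_lit M rho (lcompl l) <-> ~ sat_lit M rho l.
Proof. destruct l as [[] P ts]; unfold sat_lit, lcompl; simpl; split; auto; apply NNPP. Qed.

Lemma feval_lform M rho l : feval M rho (lform l) <-> sat_lit M rho l.
Proof. destruct l as [[] P ts]; unfold sat_lit, lform; simpl; tauto. Qed.

Lemma aind_core mp b P ts x y a (rho : var -> DD mp) :
  x <> y -> (forall r1 r2, teval (Mg mp (gfin mp)) r1 a = teval (Mg mp (gfin mp)) r2 a) ->
  (forall t, In t ts -> forall v, In v (tvars t) -> v = x \/ v = y) ->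
  let l := Lit b P ts in
  ~ sat_lit (Mg mp (gfin mp)) rho (linst l x y a a) ->
  forall e, In e (aind_clauses l x y a) -> exists k, In k e /\ sat_lit (Mg mp (gfin mp)) rho k.
Proof.
  intros Hxy Ha HV l Hn e He.
  set (M := Mg mp (gfin mp)) in *.
  set (A0 := teval M rho a).
  set (rho1 := envupd rho y A0).
  set (X := fun (u : DD mp) => aeval M P (map (teval M (envupd rho1 x u)) ts)).
  set (phi := fun (u : DD mp) => if b then X u else ~ X u).
  assert (SI : forall U (r : var -> DD mp),
    sat_lit M r (linst l x y U a) <-> phi (teval M r U)).
  { intros U r. unfold linst, lsubst, l, sat_lit, phi, X. simpl.
    rewrite map_map.
    assert (E : map (fun t => teval M r (tsubst (fun z => if Nat.eq_dec z x then U else if Nat.eq_dec z y then a else Var z) t)) ts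
              = map (teval M (envupd rho1 x (teval M r U))) ts).
    { apply map_ext_in. intros t Ht. rewrite teval_subst. apply teval_ext.
      intros v Hv. destruct (HV t Ht v Hv) as [->| ->]; unfold envupd, rho1.
      - destruct (Nat.eq_dec x x); [reflexivity|congruence].
      - destruct (Nat.eq_dec y x); [congruence|]. destruct (Nat.eq_dec y y); [|congruence].
        unfold envupd. destruct (Nat.eq_dec y y); [|congruence]. apply Ha. }
    change (dom M) with (DD mp) in *. rewrite E. reflexivity. }
  set (L1 := linst l x y (Var x) a). set (L2 := linst l x y (succ (Var x)) a).
  set (B := Imp (lform L1) (lform L2)).
  set (gA := gfin mp (All x B)).
  assert (SS : forall U, sat_lit M rho (lsubst (upd Var x (skterm (All x B))) (linst l x y U a))
                          <-> phi (teval M (envupd rho x gA) U)).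
  { intros U.
    assert (Eq : lsubst (upd Var x (skterm (All x B))) (linst l x y U a)
      = Lit b P (map (tsubst (upd Var x (skterm (All x B)))) (map (tsubst (fun z => if Nat.eq_dec z x then U else if Nat.eq_dec z y then a else Var z)) ts))) by reflexivity.
    rewrite Eq.
    assert (Eq2 : sat_lit M rho (Lit b P (map (tsubst (upd Var x (skterm (All x B)))) (map (tsubst (fun z => if Nat.eq_dec z x then U else if Nat.eq_dec z y then a else Var z)) ts)))
      <-> sat_lit M (envupd rho x gA) (linst l x y U a)).
    { unfold sat_lit, linst, lsubst, l. simpl. rewrite map_map.
      assert (E : map (fun t => teval M rho (tsubst (upd Var x (skterm (All x B))) t))
                    (map (tsubst (fun z => if Nat.eq_dec z x then U else if Nat.eq_dec z y then a else Var z)) ts)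
                = map (teval M (envupd rho x gA)) (map (tsubst (fun z => if Nat.eq_dec z x then U else if Nat.eq_dec z y then a else Var z)) ts)).
      { apply map_ext_in. intros t _. rewrite teval_subst. apply teval_ext. intros v _.
        unfold upd, envupd. destruct (Nat.eq_dec v x); reflexivity. }
      change (dom M) with (DD mp) in *. rewrite E. reflexivity. }
    rewrite Eq2. apply SI. }
  assert (Good : (exists d, ~ feval M (envupd (rho0 mp) x d) B) -> ~ feval M (envupd (rho0 mp) x gA) B)
    by apply gfin_good.
  assert (FB : forall d, feval M (envupd (rho0 mp) x d) B <-> (~ phi d \/ phi (dsucc mp d))).
  { intros d. unfold B, Imp. simpl. rewrite !feval_lform. unfold L1, L2. rewrite !SI.
    simpl. unfold envupd. destruct (Nat.eq_dec x x); [|congruence]. tauto. }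
  assert (Hn' : ~ phi A0).
  { intro H. apply Hn. apply SI. exact H. }
  assert (C1 : phi (dzero mp) -> phi gA /\ ~ phi (dsucc mp gA)).
  { intros H0. destruct (LI_lit mp (gfin mp) b P ts rho1 x A0 H0 Hn') as [d [D1 D2]].
    assert (Ex : exists d, ~ feval M (envupd (rho0 mp) x d) B) by (exists d; rewrite FB; tauto).
    assert (G := Good Ex).
    rewrite FB in G. split; [apply NNPP|]; tauto. }
  unfold l in He. rewrite aind_calc in He. simpl in He.
  assert (Z0 : sat_lit M rho (linst l x y zero a) <-> phi (dzero mp)) by (rewrite SI; reflexivity).
  destruct (classic (phi (dzero mp))) as [P0|P0].
  - destruct (C1 P0) as [Q1 Q2].
    destruct He as [<-|[<-|[]]].
    + exists (lsubst (upd Var x (skterm (All x B))) L1). split; [simpl; auto|].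
      unfold L1. rewrite SS. simpl. unfold envupd. destruct (Nat.eq_dec x x); [|congruence]. exact Q1.
    + exists (lcompl (lsubst (upd Var x (skterm (All x B))) L2)). split; [simpl; auto|].
      rewrite sat_lcompl. unfold L2. rewrite SS. simpl. unfold envupd. destruct (Nat.eq_dec x x); [|congruence]. exact Q2.
  - exists (lcompl (linst l x y zero a)). split.
    + destruct He as [<-|[<-|[]]]; simpl; auto.
    + rewrite sat_lcompl. rewrite Z0. exact P0.
Qed.
Open Scope nat_scope.

Lemma Tprime_sat mp g : forall c, In c (CNFs (map (sk QEx) T')) -> sat_clause (Mg mp g) c.
Proof.
  intros c Hc. vm_compute in Hc.
  repeat (destruct Hc as [<-|Hc]; [intros rho; simpl|]); [..|destruct Hc].
  - eexists; split; [left; reflexivity|]. simpl. apply T1.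
  - eexists; split; [left; reflexivity|]. simpl. apply T2.
  - eexists; split; [left; reflexivity|]. simpl. apply T3.
  - eexists; split; [left; reflexivity|]. simpl. apply T4.
  - eexists; split; [left; reflexivity|]. simpl. apply T5.
  - destruct (classic (rho 0 = dzero mp)) as [E|E].
    + eexists; split; [left; reflexivity|]. simpl. exact E.
    + eexists; split; [right; left; reflexivity|]. simpl. apply T6. exact E.
  - eexists; split; [left; reflexivity|]. simpl. apply T7.
  - eexists; split; [left; reflexivity|]. simpl. apply T8.
  - destruct (classic (dadd mp (rho 0) (rho 1) = dadd mp (rho 0) (rho 2))) as [E|E].
    + eexists; split; [right; left; reflexivity|]. simpl. eapply T9. exact E.
    + eexists; split; [left; reflexivity|]. simpl. exact E.
Qed.
Open Scope nat_scope.

Fixpoint dmul mp (m : nat) (d : DD mp) : DD mp :=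
  match m with O => dzero mp | S m' => match m' with O => d | _ => dadd mp d (dmul mp m' d) end end.

Lemma teval_mult mp g rho m t : teval (Mg mp g) rho (mult m t) = dmul mp m (teval (Mg mp g) rho t).
Proof.
  induction m as [|m IH]; [reflexivity|]. destruct m as [|m]; [reflexivity|].
  change (mult (S (S m)) t) with (plus t (mult (S m) t)). unfold plus. simpl teval. change (match m with 0 => t | S _ => plus t (mult m t) end) with (mult (S m) t). rewrite IH. reflexivity.
Qed.

Lemma teval_succn mp g rho n t : teval (Mg mp g) rho (succn n t) = Nat.iter n (dsucc mp) (teval (Mg mp g) rho t).
Proof. induction n as [|n IH]; [reflexivity|]. simpl. rewrite <- IH. reflexivity. Qed.

Lemma val_dmul mp m d : val (dmul mp m d) = gmul (Z.pos mp) m (val d).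
Proof.
  induction m as [|m IH]; [reflexivity|]. destruct m as [|m].
  - simpl dmul. rewrite gmul1; [reflexivity|lia|apply val_rok].
  - change (val (dmul mp (S (S m)) d)) with (gadd (Z.pos mp) (val d) (val (dmul mp (S m) d))).
    rewrite IH. reflexivity.
Qed.

Lemma val_iter_succ mp n d : val (Nat.iter n (dsucc mp) d) = shK (Z.pos mp * Z.of_nat n) (val d).
Proof.
  induction n as [|n IH].
  - change (Nat.iter 0 (dsucc mp) d) with d. destruct (val d) as [[k r] j]. unfold shK. f_equal; f_equal; lia.
  - change (val (Nat.iter (S n) (dsucc mp) d)) with (shK (Z.pos mp) (val (Nat.iter n (dsucc mp) d))).
    rewrite IH. destruct (val d) as [[k r] j]. unfold shK. f_equal; f_equal; lia.
Qed.

Lemma mk_elem mp k r j : validb (Z.pos mp) (k,r,j) = true -> exists d : DD mp, val d = (k,r,j).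
Proof. intros H. exists (exist (fun v => validb (Z.pos mp) v = true) (k,r,j) H). reflexivity. Qed.

Lemma X_exists mp m : Z.pos mp = Z.of_nat m -> 2 <= m ->
  exists d e : DD mp, dmul mp m d = dmul mp m e /\ d <> e.
Proof.
  intros Hm H2.
  destruct (mk_elem mp 0 1 1) as [d Hd]. { apply validb_spec; lia. }
  destruct (mk_elem mp 0 0 1) as [e He]. { apply validb_spec; lia. }
  exists d, e. split.
  - apply val_inj. rewrite !val_dmul, Hd, He, !gmul_closed by lia.
    rewrite <- Hm. rewrite Z.mul_1_r, Z.mul_0_r, Z.mod_same, Z.mod_0_l by lia. reflexivity.
  - intro E. subst. rewrite Hd in He. inversion He.
Qed.

Lemma Y_exists mp m n : Z.pos mp = Z.of_nat m ->
  exists d e : DD mp, Nat.iter n (dsucc mp) (dmul mp m d) = dmul mp m e.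
Proof.
  intros Hm.
  destruct (mk_elem mp 0 0 1) as [d Hd]. { apply validb_spec; lia. }
  destruct (mk_elem mp (Z.of_nat n) 0 1) as [e He]. { apply validb_spec; lia. }
  exists d, e.
  apply val_inj. rewrite val_iter_succ, !val_dmul, Hd, He, !gmul_closed by lia.
  rewrite <- Hm. rewrite !Z.mul_0_r, Z.mod_0_l by lia. simpl. f_equal; f_equal; lia.
Qed.
Open Scope nat_scope.

Lemma envupd_same {T} (r : var -> T) x d : envupd r x d x = d.
Proof. unfold envupd. destruct (Nat.eq_dec x x); congruence. Qed.

Lemma C_sat mp m : Z.pos mp = Z.of_nat m -> 2 <= m ->
  forall c, In c (CNF (sk QEx (Neg (C_ m)))) -> sat_clause (Mg mp (gfin mp)) c.
Proof.
  intros Hm H2 c Hc.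
  unfold sk, C_ in Hc. simpl fsize in Hc. cbn -[binder_var mult fvs] in Hc.
  set (z := binder_var _ _ _) in Hc.
  set (C := All vx (All vy (Imp (eqf (mult m tx) (mult m ty)) (eqf tx ty)))) in Hc.
  set (A2 := All z _) in Hc.
  set (M := Mg mp (gfin mp)).
  assert (F1 : forall d, feval M (envupd (rho0 mp) vx d) (All vy (Imp (eqf (mult m tx) (mult m ty)) (eqf tx ty)))
                <-> forall e, dmul mp m d = dmul mp m e -> d = e).
  { intros d. unfold M. simpl. split; intros H e; specialize (H e); rewrite ?teval_mult in *;
    unfold tx, ty, vx, vy, envupd in *; simpl in *; tauto. }
  assert (G1 := gfin_good mp vx (All vy (Imp (eqf (mult m tx) (mult m ty)) (eqf tx ty)))).
  fold C in G1. fold M in G1. rewrite !F1 in G1.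
  assert (E1 : exists e, dmul mp m (gfin mp C) = dmul mp m e /\ gfin mp C <> e).
  { apply NNPP. intro N. apply G1.
    - destruct (X_exists mp m Hm H2) as [d [e [D1 D2]]]. exists d. intro H. rewrite F1 in H. apply D2. apply H. exact D1.
    - intros e D1. apply NNPP. intro D2. apply N. eauto. }
  assert (F2 : forall d, feval M (envupd (rho0 mp) z d) (match A2 with All _ B => B | _ => A2 end)
                <-> (~ dmul mp m (gfin mp C) = dmul mp m d \/ gfin mp C = d)).
  { intros d. unfold A2, M. simpl. rewrite !teval_subst, !teval_mult. simpl. rewrite !envupd_same. tauto. }
  assert (G2 := gfin_good mp z (match A2 with All _ B => B | _ => A2 end)).
  change (All z (match A2 with All _ B => B | _ => A2 end)) with A2 in G2. fold M in G2.
  rewrite !F2 in G2.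
  destruct E1 as [e [E1 E2]].
  assert (G2' : dmul mp m (gfin mp C) = dmul mp m (gfin mp A2) /\ gfin mp C <> gfin mp A2).
  { assert (Hx : exists d, ~ feval M (envupd (rho0 mp) z d) (match A2 with All _ B => B | _ => A2 end))
      by (exists e; rewrite F2; tauto).
    specialize (G2 Hx). split; tauto. }
  destruct Hc as [<-|[<-|[]]]; intros rho; eexists; (split; [left; reflexivity|]); unfold sat_lit, M in *; simpl;
    rewrite ?teval_subst, ?teval_mult; simpl; unfold upd; (destruct (Nat.eq_dec z z); [|congruence]); simpl.
  all: tauto.
Qed.

Lemma D_sat mp m n : Z.pos mp = Z.of_nat m ->
  forall c, In c (CNF (sk QEx (Neg (D_ m n)))) -> sat_clause (Mg mp (gfin mp)) c.
Proof.
  intros Hm c Hc.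
  unfold sk, D_ in Hc. simpl fsize in Hc. cbn -[binder_var mult succn fvs] in Hc.
  set (z := binder_var _ _ _) in Hc.
  set (C := All vx (All vy (neqf (succn n (mult m tx)) (mult m ty)))) in Hc.
  set (A2 := All z _) in Hc.
  set (M := Mg mp (gfin mp)).
  assert (F1 : forall d, feval M (envupd (rho0 mp) vx d) (All vy (neqf (succn n (mult m tx)) (mult m ty)))
                <-> forall e, Nat.iter n (dsucc mp) (dmul mp m d) <> dmul mp m e).
  { intros d. unfold M. simpl. split; intros H e; specialize (H e); rewrite ?teval_succn, ?teval_mult in *;
    unfold tx, ty, vx, vy, envupd in *; simpl in *; tauto. }
  assert (G1 := gfin_good mp vx (All vy (neqf (succn n (mult m tx)) (mult m ty)))).
  fold C in G1. fold M in G1. rewrite !F1 in G1.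
  assert (E1 : exists e, Nat.iter n (dsucc mp) (dmul mp m (gfin mp C)) = dmul mp m e).
  { apply NNPP. intro N. apply G1.
    - destruct (Y_exists mp m n Hm) as [d [e D1]]. exists d. intro H. rewrite F1 in H. apply (H e). exact D1.
    - intros e D1. apply N. eauto. }
  assert (F2 : forall d, feval M (envupd (rho0 mp) z d) (match A2 with All _ B => B | _ => A2 end)
                <-> ~ Nat.iter n (dsucc mp) (dmul mp m (gfin mp C)) = dmul mp m d).
  { intros d. unfold A2, M. simpl. rewrite !teval_subst, teval_succn, !teval_mult. simpl. rewrite !envupd_same. tauto. }
  assert (G2 := gfin_good mp z (match A2 with All _ B => B | _ => A2 end)).
  change (All z (match A2 with All _ B => B | _ => A2 end)) with A2 in G2. fold M in G2.
  rewrite !F2 in G2.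
  destruct E1 as [e E1].
  assert (G2' : Nat.iter n (dsucc mp) (dmul mp m (gfin mp C)) = dmul mp m (gfin mp A2)).
  { assert (Hx : exists d, ~ feval M (envupd (rho0 mp) z d) (match A2 with All _ B => B | _ => A2 end))
      by (exists e; rewrite F2; tauto).
    specialize (G2 Hx). apply NNPP. exact G2. }
  destruct Hc as [<-|[]]; intros rho; eexists; (split; [left; reflexivity|]); unfold sat_lit, M in *; simpl;
    rewrite ?teval_subst, ?teval_succn, ?teval_mult; simpl; unfold upd; (destruct (Nat.eq_dec z z); [|congruence]); simpl.
  exact G2'.
Qed.
Open Scope nat_scope.

Lemma no_refute mp (S : sat_system) (C0 : clause_set) :
  sound S -> models (Mg mp (gfin mp)) C0 -> ~ refutes (ssum S literal_aind2) C0.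
Proof.
  intros Hs HM [Dk [Hded Hemp]].
  set (M := Mg mp (gfin mp)) in *.
  assert (Inv : forall D, deduction (ssum S literal_aind2) C0 D -> models M D).
  { intros D Hd. induction Hd as [|Di Ci Bi Hd IH Hsame Hrule].
    - exact HM.
    - assert (MC : models M Ci) by (intros c Hc; apply IH, Hsame, Hc).
      intros c [Hc|Hc]; [apply IH, Hc|].
      destruct Hrule as [HS|HA].
      + assert (Hder : derivable S Ci c).
        { exists (fun c => Ci c \/ In c Bi). split; [|right; exact Hc].
          apply (ded_step S Ci Ci Ci Bi (ded_start S Ci)); [intro; tauto|exact HS]. }
        destruct (Hs Ci c Hder) as [_ He]. apply He. exact MC.
      + destruct HA as (l & x & y & a & c0 & D & Hxy & Hca & Hlv & HD & HDi & HB).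
        subst Bi. unfold clauses_or in Hc. apply in_map_iff in Hc. destruct Hc as [e [<- He]].
        intros rho. destruct (MC D HD rho) as [k [Hk Hks]].
        apply HDi in Hk. destruct Hk as [->|Hk].
        * destruct l as [b P ts].
          assert (Ha : forall r1 r2, teval M r1 a = teval M r2 a).
          { destruct Hca as [f [-> _]]. reflexivity. }
          assert (HV : forall t, In t ts -> forall v, In v (tvars t) -> v = x \/ v = y).
          { intros t Ht v Hv. apply NNPP. intro Hn.
            assert (Hin : In v (lvars (linst (Lit b P ts) x y a a))).
            { unfold lvars, linst, lsubst. simpl. apply in_flat_map.
              exists (tsubst (fun z => if Nat.eq_dec z x then a else if Nat.eq_dec z y then a else Var z) t).
              split; [apply in_map; auto|]. apply tvars_keep; auto.
              destruct (Nat.eq_dec v x); [tauto|]. destruct (Nat.eq_dec v y); [tauto|]. reflexivity. }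
            rewrite Hlv in Hin. destruct Hin. }
          rewrite sat_lcompl in Hks.
          destruct (aind_core mp b P ts x y a rho Hxy Ha HV Hks e He) as [k' [Hk' Hs']].
          exists k'. split; [apply in_or_app; left; auto|exact Hs'].
        * exists k. split; [apply in_or_app; right; auto|exact Hks]. }
  specialize (Inv Dk Hded [] Hemp (fun _ => dzero mp)). destruct Inv as [? [[] _]].
Qed.

Lemma CNFs_app l1 l2 : CNFs (l1 ++ l2) = CNFs l1 ++ CNFs l2.
Proof. unfold CNFs. apply flat_map_app. Qed.

Theorem theorem6 :
  forall S : sat_system,
    is_sat_system S -> sound S -> refutationally_complete S ->
    forall n m : nat, 0 < n -> n < m ->
      ~ refutes (ssum S literal_aind2) (X_ m) /\
      ~ refutes (ssum S literal_aind2) (Y_ m n).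
Proof.
  intros S _ Hs _ n m Hn Hnm.
  assert (Hm2 : 2 <= m) by lia.
  set (mp := Z.to_pos (Z.of_nat m)).
  assert (Hmp : Z.pos mp = Z.of_nat m) by (unfold mp; rewrite Z2Pos.id; lia).
  split; apply (no_refute mp); auto; intros c Hc;
    unfold X_, Y_, of_list in Hc; rewrite map_app, CNFs_app in Hc; apply in_app_iff in Hc;
    (destruct Hc as [Hc|Hc]; [apply Tprime_sat; exact Hc|]);
    unfold CNFs in Hc; cbn [map flat_map] in Hc; rewrite app_nil_r in Hc.
  - apply (C_sat mp m); auto.
  - apply (D_sat mp m n); auto.
Qed.
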